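(* For all program states $(s,h)$ and all $f\in\mathbb{T}$, $$\mathsf{ert}[\![x:=\langle e\rangle]\!](f)(s,h)=\begin{cases} f(s[x\mapsto h(s(e))],h) & \text{if } s(e)\in\mathrm{dom}(h),\\ \infty & \text{if } s(e)\notin\mathrm{dom}(h),\end{cases}$$ where $\mathsf{ert}[\![x:=\langle e\rangle]\!](f)=\inf v\colon [e\mapsto v]\oplus([e\mapsto v]\mathbin{-\!\!\ominus} f[x/v])$ with $v$ a fresh variable.
   Context: Fix a finite set $\mathrm{Vars}$ of variables. A stack is $s\colon\mathrm{Vars}\to\mathbb{N}$; a heap is a partial map $h$ from a finite set $\mathrm{dom}(h)\subseteq\mathbb{N}_{>0}$ to $\mathbb{N}$; $h_1\perp h_2$ means disjoint domains, and then $h_1\star h_2$ is their union. $\mathsf{States}$ is the set of pairs $(s,h)$; $s(e)$ is the value of a heap-independent arithmetic expression $e$; $s[x\mapsto v]$ is the updated stack. $\mathbb{T}$ is the set of functions $\mathsf{States}\to[0,\infty]$. Truncated subtraction: $a\dot- b=\max(a-b,0)$, $\infty\dot- b=\infty$ for finite $b$, $a\dot-\infty=0$. $(f\oplus g)(s,h)=\min\{f(s,h_1)+g(s,h_2)\mid h=h_1\star h_2\}$; $(f\mathbin{-\!\!\ominus} g)(s,h)=\sup\{g(s,h\star h')\dot- f(s,h')\mid h'\perp h\}$; $(\inf v\colon f)(s,h)=\inf_{n\in\mathbb{N}}f(s[v\mapsto n],h)$; $f[x/v](s,h)=f(s[x\mapsto s(v)],h)$. $[e\mapsto e'](s,h)=0$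 if $\mathrm{dom}(h)=\{s(e)\}$ and $h(s(e))=s(e')$, and $\infty$ otherwise. *)

(* Defs.v *)
(* values in [0,oo] are modelled as extended reals
   \bar R (R : realType); nonnegativity of f is an explicit hypothesis. *)
From HB Require Import structures.
From mathcomp Require Import all_boot all_order all_algebra.
From mathcomp Require Import boolp classical_sets reals constructive_ereal ereal.
Set Implicit Arguments. Unset Strict Implicit. Unset Printing Implicit Defensive.
Import Order.TTheory GRing.Theory Num.Theory.
Local Open Scope classical_set_scope.
Local Open Scope ereal_scope.

Section SL.
Variable Vars : finType.
Variable R : realType.

Definition stack := Vars -> nat.

Record heap := Heap {
  hfun : nat -> option nat;
  hfin : exists N, forall n, (N <= n)%N -> hfun n = None;
  hpos : hfun 0%N = None }.

Definition in_dom (h : heap) (l : nat) : Prop := hfun h l <> None.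

Definition hdisj (h1 h2 : heap) : Prop :=
  forall l, ~ (in_dom h1 l /\ in_dom h2 l).

Definition hsplit (h h1 h2 : heap) : Prop :=
  hdisj h1 h2 /\
  forall l, hfun h l = match hfun h1 l with Some n => Some n | None => hfun h2 l end.

Definition state := (stack * heap)%type.
Definition T := state -> \bar R.

Definition expr := stack -> nat.

Definition upd (s : stack) (x : Vars) (n : nat) : stack :=
  fun y => if y == x then n else s y.

Definition tsub (a b : \bar R) : \bar R :=
  match b with
  | +oo => 0
  | _ => maxe (a - b) 0
  end.

Definition sepcon (f g : T) : T := fun st =>
  ereal_inf [set r | exists h1 h2 : heap,
     hsplit st.2 h1 h2 /\ r = f (st.1, h1) + g (st.1, h2)].

Definition sepimp (f g : T) : T := fun st =>
  ereal_sup [set r | exists h' hh : heap,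
     hdisj st.2 h' /\ hsplit hh st.2 h' /\ r = tsub (g (st.1, hh)) (f (st.1, h'))].

Definition infv (v : Vars) (f : T) : T := fun st =>
  ereal_inf [set f (upd st.1 v n, st.2) | n in @setT nat].

Definition subst (f : T) (x v : Vars) : T := fun st =>
  f (upd st.1 x (st.1 v), st.2).

Definition pto (e e' : expr) : T := fun st =>
  if `[< forall l, hfun st.2 l = if l == e st.1 then Some (e' st.1) else None >]
  then 0 else +oo.

Definition var_expr (v : Vars) : expr := fun s => s v.

Definition ert_lookup (x : Vars) (e : expr) (v : Vars) (f : T) : T :=
  infv v (sepcon (pto e (var_expr v)) (sepimp (pto e (var_expr v)) (subst f x v))).

End SL.

(* Main.v *)
Require Import Defs.
From HB Require Import structures.
From mathcomp Require Import all_boot all_order all_algebra.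
From mathcomp Require Import boolp classical_sets reals constructive_ereal ereal.
Import Order.TTheory GRing.Theory Num.Theory.
Local Open Scope ereal_scope.

Lemma heap_ext (h1 h2 : heap) : hfun h1 =1 hfun h2 -> h1 = h2.
Proof.
case: h1 h2 => f1 F1 P1 [f2 F2 P2] /= E.
have ? : f1 = f2 by apply: funext.
subst f2. by rewrite (Prop_irrelevance F1 F2) (Prop_irrelevance P1 P2).
Qed.

Definition emp_heap : heap.
Proof. by refine (@Heap (fun _ => None) (ex_intro _ 0%N (fun _ _ => erefl)) erefl). Defined.

Definition rem_heap (h : heap) (L : nat) : heap.
Proof.
refine (@Heap (fun l => if l == L then None else hfun h l) _ _).
- case: (hfin h) => N HN; exists N => n Hn; case: ifP => // _; exact: HN.
- case: ifP => // _; exact: hpos.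
Defined.

Definition sing_heap (L n : nat) (L0 : L <> 0%N) : heap.
Proof.
refine (@Heap (fun l => if l == L then Some n else None) _ _).
- exists L.+1 => l Hl; rewrite ifN //; apply/eqP => E; move: Hl; rewrite E ltnn.
  by [].
- rewrite ifN //; apply/eqP => E; exact: L0 (esym E).
Defined.

Lemma upd_comm (Vars : finType) (s : stack Vars) x v a b :
  v <> x -> upd (upd s v a) x b = upd (upd s x b) v a.
Proof.
move=> vx; apply: funext => y; rewrite /upd.
have [->|yx] := eqVneq y x.
  have [xv|xv] := eqVneq x v; first by exfalso; apply: vx; rewrite xv.
  by [].
by [].
Qed.

Lemma sepimp_ge0 (Vars : finType) (R : realType) (f g : T Vars R) st :
  0 <= sepimp f g st.
Proof.
apply: le_ereal_sup_tmp.
exists (tsub (g (st.1, st.2)) (f (st.1, emp_heap))).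
  exists emp_heap, st.2; split; first by move=> l [].
  split=> //; split; first by move=> l [].
  by move=> l /=; case: (hfun st.2 l).
rewrite /tsub; case: (f _) => //= *; by rewrite le_max lexx orbT.
Qed.

Theorem mainTheorem13 (Vars : finType) (R : realType)
  (x v : Vars) (e : expr Vars) (f : T Vars R)
  (f_ge0 : forall st, 0 <= f st)
  (v_neq_x : v <> x)
  (v_fresh_e : forall s n, e (upd s v n) = e s)
  (v_fresh_f : forall s h n, f (upd s v n, h) = f (s, h))
  (s : stack Vars) (h : heap) :
  ert_lookup x e v f (s, h) =
    match hfun h (e s) with
    | Some n => f (upd s x n, h)
    | None => +oo
    end.
Proof.
rewrite /ert_lookup /infv /sepcon /=.
set G := sepimp _ _.
have updv : forall n, upd s v n v = n by move=> n; rewrite /upd eqxx.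
have ptoE : forall n h1, pto (Vars:=Vars) R e (var_expr v) (upd s v n, h1) =
   if `[< forall l, hfun h1 l = if l == e s then Some n else None >] then 0 else +oo.
  by move=> n h1; rewrite /pto /var_expr /= v_fresh_e updv.
case Hh: (hfun h (e s)) => [n0|].
- apply/eqP; rewrite eq_le; apply/andP; split.
  + apply: ereal_inf_le.
    have L0 : e s <> 0%N by move=> E; move: Hh; rewrite E (hpos h).
    pose h1 := @sing_heap (e s) n0 L0.
    exists (ereal_inf [set r | exists h1 h2 : heap, hsplit h h1 h2 /\ r =
       pto R e (var_expr v) (upd s v n0, h1) + G (upd s v n0, h2)]).
      by exists n0.
    apply: ereal_inf_le; exists (0 + G (upd s v n0, rem_heap h (e s))).
      exists h1, (rem_heap h (e s)); split.
        split.
          by move=> l [] /=; rewrite /in_dom /=; case: ifP.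
        by move=> l /=; case: ifP => [/eqP ->|]; rewrite ?Hh.
      rewrite ptoE; case: asboolP => [//|[]]; by [].
    rewrite add0e.
    apply/ereal_supP => r [h' [hh [Hd [[_ Hs] ->]]]].
    rewrite ptoE; case: asboolP => [Hh'|_]; last by rewrite /tsub.
    have -> : hh = h.
      apply: heap_ext => l; rewrite Hs /= Hh'.
      by case: ifP => [/eqP ->|]; rewrite ?Hh //; case: (hfun h l).
    rewrite /tsub /subst /= updv sube0 max_l ?f_ge0 //.
    by rewrite upd_comm // v_fresh_f.
  + apply/ereal_infP => r0 [n _ <-].
    apply/ereal_infP => r [h1 [h2 [[Hd Hs] ->]]].
    rewrite ptoE; case: asboolP => [Hh1|_]; last by rewrite addye ?leey // gt_eqF // (lt_le_trans _ (sepimp_ge0 _ _ _ _ _)) // ltNyr.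
    have nE : n = n0.
      by move: Hh; rewrite Hs Hh1 eqxx => -[].
    subst n; rewrite add0e; apply: le_ereal_sup_tmp.
    exists (f (upd s x n0, h)) => //.
    exists h1, h; split.
      by move=> l [A B]; apply: (Hd l); split.
    split; first split.
        by move=> l [A B]; apply: (Hd l); split.
      move=> l; rewrite Hs; case E1: (hfun h1 l) => [a|]; case E2: (hfun h2 l) => [b|] //.
      by exfalso; apply: (Hd l); rewrite /in_dom E1 E2.
    rewrite ptoE; case: asboolP => [_|[]]; last by [].
    rewrite /tsub /subst /= updv sube0 max_l ?f_ge0 //.
    by rewrite upd_comm // v_fresh_f.
- apply/ereal_inf_pinfty => r0 [n _ <-].
  apply/ereal_inf_pinfty => r [h1 [h2 [[Hd Hs] ->]]].
  rewrite ptoE; case: asboolP => [Hh1|_].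
    by move: Hh; rewrite Hs Hh1 eqxx.
  by rewrite addye // gt_eqF // (lt_le_trans _ (sepimp_ge0 _ _ _ _ _)) // ltNyr.
Qed.
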